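(* There exists $\bar\eta>0$ such that for every $\eta_1\ge\bar\eta$, every solution $\phi$ of $\phi''+f(\xi,\phi,\phi')=0$ with $\phi(\eta_1)=1$ and $\phi'(\eta_1)\le0$ satisfies $\phi'(\eta_2)<-1$ for every $\eta_2>\eta_1$ (in the maximal existence interval of $\phi$) with $\phi(\eta_2)\in[0,1/2]$.
   Context: Fix $d>2$. Define $f(\eta,v,w)=\frac{d+1}{\eta}w-\frac\eta2 w+\frac1d\eta v w+v^2-v$ for $\eta>0$, $v,w\in\mathbb R$. For $(\eta_0,v_0,w_0)$ with $\eta_0>0$, $\phi(\xi;\eta_0,v_0,w_0)$ denotes the solution of $\phi''+f(\xi,\phi,\phi')=0$ (derivatives in $\xi$) with $\phi(\eta_0)=v_0$, $\phi'(\eta_0)=w_0$. *)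

(* Defs.v *)
From Stdlib Require Import Reals Lra.
From Coquelicot Require Import Coquelicot.
Open Scope R_scope.

Definition f (d eta v w : R) : R :=
  (d + 1) / eta * w - eta / 2 * w + / d * eta * v * w + v ^ 2 - v.

Definition solves_on (d a b : R) (phi dphi : R -> R) : Prop :=
  forall x, a < x < b ->
    is_derive phi x (dphi x) /\
    is_derive dphi x (- f d x (phi x) (dphi x)).

(* Main.v *)
Require Import Defs.
From Stdlib Require Import Reals Lra Psatz.
From Coquelicot Require Import Coquelicot.
Open Scope R_scope.

Lemma dlim_cont f x l : derivable_pt_lim f x l -> continuity_pt f x.
Proof.
  intro H. apply derivable_continuous_pt. exists l. exact H.
Qed.

Lemma pos_nbhd f x : continuity_pt f x -> 0 < f x ->
  exists del, 0 < del /\ forall y, Rabs (y - x) < del -> 0 < f y.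
Proof.
  intros Hc Hp. destruct (Hc (f x) Hp) as [del [Hd Hy]].
  exists del. split; [lra|]. intros y Hyx.
  destruct (Req_dec y x) as [->|Hne]; [lra|].
  assert (Hh := Hy y). unfold D_x, no_cond in Hh. simpl in Hh. unfold Rdist in Hh.
  assert (Rabs (f y - f x) < f x) by (apply Hh; split; [split; [exact I| auto] | exact Hyx]).
  apply Rabs_def2 in H. lra.
Qed.

Lemma loc_decr f x l : derivable_pt_lim f x l -> l < 0 ->
  exists del, 0 < del /\ forall h, 0 < h < del -> f (x + h) < f x.
Proof.
  intros H Hl. destruct (H (- l / 2)) as [del Hd]; [lra|].
  exists del. split; [apply cond_pos|]. intros h Hh.
  assert (A := Hd h ltac:(lra) ltac:(rewrite Rabs_pos_eq; lra)).
  apply Rabs_def2 in A. destruct A as [A1 A2].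
  assert (B : (f (x + h) - f x) / h < 0) by lra.
  assert (C : f (x + h) - f x < 0).
  { replace (f (x + h) - f x) with ((f (x + h) - f x) / h * h) by (field; lra).
    nra. }
  lra.
Qed.

Theorem lemmaA2 (d : R) (hd : 2 < d) :
  exists etabar : R, 0 < etabar /\
    forall (eta1 eta2 a b : R) (phi dphi : R -> R),
      etabar <= eta1 ->
      0 < a -> a < eta1 -> eta1 < eta2 -> eta2 < b ->
      solves_on d a b phi dphi ->
      phi eta1 = 1 -> dphi eta1 <= 0 ->
      0 <= phi eta2 <= 1 / 2 ->
      dphi eta2 < -1.
Proof.
  exists (d + 1 + 10 * d / (d - 2)).
  assert (Hq : 0 < 10 * d / (d - 2)) by (apply Rdiv_lt_0_compat; lra).
  split; [lra|].
  intros eta1 eta2 a b phi dphi He1 Ha Hae Hee Heb Hsol Hp1 Hd1 Hp2.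
  destruct (Rlt_or_le (dphi eta2) (-1)) as [Hok|Hbad]; [exact Hok|exfalso].
  set (G := fun t => dphi t + 3 * (1 - phi t)).
  set (H := fun t => 1 - phi t).
  assert (Dphi : forall t, a < t < b -> derivable_pt_lim phi t (dphi t)).
  { intros t Ht. apply is_derive_Reals. apply (Hsol t Ht). }
  assert (Ddphi : forall t, a < t < b ->
     derivable_pt_lim dphi t (- Defs.f d t (phi t) (dphi t))).
  { intros t Ht. apply is_derive_Reals. apply (Hsol t Ht). }
  assert (DH : forall t, a < t < b -> derivable_pt_lim H t (- dphi t)).
  { intros t Ht. unfold H.
    replace (- dphi t) with (0 - dphi t) by ring.
    apply (derivable_pt_lim_minus (fun _ => 1) phi).
    apply derivable_pt_lim_const. apply Dphi; auto. }
  assert (DG : forall t, a < t < b ->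
     derivable_pt_lim G t (- Defs.f d t (phi t) (dphi t) + 3 * (- dphi t))).
  { intros t Ht. unfold G.
    apply (derivable_pt_lim_plus dphi (fun t => 3 * (1 - phi t))).
    apply Ddphi; auto.
    apply (derivable_pt_lim_scal (fun t => 1 - phi t)). apply DH; auto. }
  set (A := fun t => eta1 <= t <= eta2 /\ (G t <= 0 \/ H t <= 0)).
  assert (Hb : bound A) by (exists eta2; intros t [Ht _]; lra).
  assert (Hne : exists t, A t).
  { exists eta1. split; [lra|]. right. unfold H. lra. }
  destruct (completeness A Hb Hne) as [t0 [Hub Hlub]].
  assert (Ht0a : eta1 <= t0) by (apply Hub; split; [lra| right; unfold H; lra]).
  assert (Ht0b : t0 <= eta2) by (apply Hlub; intros t [Ht _]; lra).
  assert (Hright : forall t, t0 < t <= eta2 -> 0 < G t /\ 0 < H t).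
  { intros t Ht. destruct (Rlt_or_le 0 (G t)); destruct (Rlt_or_le 0 (H t)); auto;
    assert (t <= t0) by (apply Hub; split; [lra|]; auto); lra. }
  assert (HG2 : 0 < G eta2) by (unfold G; lra).
  assert (HH2 : 0 < H eta2) by (unfold H; lra).
  assert (Hin : forall t, eta1 <= t <= eta2 -> a < t < b) by (intros; lra).
  assert (Ht0in : a < t0 < b) by lra.
  assert (CG := dlim_cont _ _ _ (DG t0 Ht0in)).
  assert (CH := dlim_cont _ _ _ (DH t0 Ht0in)).
  assert (Hat : G t0 <= 0 \/ H t0 <= 0).
  { destruct (Rlt_or_le 0 (G t0)) as [g|g]; destruct (Rlt_or_le 0 (H t0)) as [h|h]; auto.
    exfalso.
    destruct (pos_nbhd _ _ CG g) as [d1 [Hdd1 P1]].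
    destruct (pos_nbhd _ _ CH h) as [d2 [Hd2 P2]].
    assert (t0 <= t0 - Rmin d1 d2 / 2).
    { apply Hlub. intros t [Ht [Hx|Hx]];
      destruct (Rle_or_lt t (t0 - Rmin d1 d2 / 2)) as [|Hlt]; auto;
      assert (t <= t0) by (apply Hub; split; auto);
      assert (Rabs (t - t0) < d1 /\ Rabs (t - t0) < d2) by
        (split; apply Rabs_def1; pose proof (Rmin_l d1 d2); pose proof (Rmin_r d1 d2); lra);
      [assert (0 < G t) by (apply P1; tauto) | assert (0 < H t) by (apply P2; tauto)]; lra. }
    pose proof (Rmin_glb_lt d1 d2 0). assert (0 < Rmin d1 d2) by (apply Rmin_glb_lt; auto). lra. }
  assert (Ht0lt : t0 < eta2).
  { destruct Ht0b as [|e]; auto. subst t0. lra. }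
  assert (HG0 : 0 <= G t0).
  { destruct (Rle_or_lt 0 (G t0)) as [|g]; auto. exfalso.
    assert (g' : 0 < - G t0) by lra.
    assert (CG' : continuity_pt (fun t => - G t) t0) by (apply continuity_pt_opp; auto).
    destruct (pos_nbhd _ _ CG' g') as [d1 [Hdd1 P1]].
    set (t := Rmin (t0 + d1 / 2) eta2).
    assert (t0 < t <= eta2).
    { unfold t. split; [apply Rmin_glb_lt; lra| apply Rmin_r]. }
    assert (Rabs (t - t0) < d1).
    { apply Rabs_def1; unfold t in *; pose proof (Rmin_l (t0 + d1/2) eta2); lra. }
    assert (0 < - G t) by (apply P1; auto).
    destruct (Hright t); auto; lra. }
  destruct (Rle_or_lt (H t0) 0) as [Hh0|Hh0].
  -
    set (K := fun t => H t * exp (- (3 * t))).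
    set (dK := fun t => - G t * exp (- (3 * t))).
    assert (DK : forall t, a < t < b -> derivable_pt_lim K t (dK t)).
    { intros t Ht. unfold K, dK.
      replace (- G t * exp (- (3 * t))) with
        ((- dphi t) * exp (- (3 * t)) + H t * (exp (- (3 * t)) * (- (3 * 1))))
        by (unfold G, H; ring).
      apply (derivable_pt_lim_mult H (fun t => exp (- (3 * t)))). apply DH; auto.
      apply (derivable_pt_lim_comp (fun t => - (3 * t)) exp).
      apply derivable_pt_lim_opp. apply derivable_pt_lim_scal. apply derivable_pt_lim_id.
      apply derivable_pt_lim_exp. }
    destruct (MVT_gen K t0 eta2 dK) as [c [Hc Heq]].
    + intros x Hx. rewrite Rmin_left in Hx by lra. rewrite Rmax_right in Hx by lra.
      apply is_derive_Reals. apply DK. lra.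
    + intros x Hx. rewrite Rmin_left in Hx by lra. rewrite Rmax_right in Hx by lra.
      apply (dlim_cont _ _ _ (DK x ltac:(lra))).
    + rewrite Rmin_left in Hc by lra. rewrite Rmax_right in Hc by lra.
      assert (0 <= G c).
      { destruct Hc as [[Hc1|Hc1] Hc2]. destruct (Hright c); lra. subst; auto. }
      assert (dK c <= 0).
      { unfold dK. pose proof (exp_pos (- (3 * c))). nra. }
      assert (K t0 <= 0) by (unfold K; pose proof (exp_pos (- (3 * t0))); nra).
      assert (0 < K eta2) by (unfold K; pose proof (exp_pos (- (3 * eta2))); nra).
      nra.
  -
    assert (HGz : G t0 = 0) by (destruct Hat; lra).
    set (x := t0) in *. set (p := phi t0). set (q := dphi t0).
    assert (Hq3 : q = - 3 * (1 - p)) by (unfold G in HGz; unfold q, p, x in *; lra).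
    assert (Hhp : 0 < 1 - p) by (unfold H in Hh0; unfold p, x in *; lra).
    assert (Hx0 : 0 < x) by lra.
    assert (Hxd : d + 1 <= x) by lra.
    assert (Hxd2 : 10 * d <= x * (d - 2)).
    { assert (10 * d / (d - 2) <= x) by lra.
      apply Rmult_le_compat_r with (r := d - 2) in H0; [|lra].
      replace (10 * d / (d - 2) * (d - 2)) with (10 * d) in H0 by (field; lra). lra. }
    set (hh := 1 - p) in *.
    assert (Eq : - Defs.f d x p q + 3 * (- q) =
       hh * (- 3 * x * (d - 2) / (2 * d) - 3 * x * hh / d + 3 * (d + 1) / x + 10 - hh)).
    { unfold Defs.f. rewrite Hq3. unfold hh. field. lra. }
    assert (T1 : 3 * x * (d - 2) / (2 * d) >= 15).
    { apply Rle_ge. apply (Rmult_le_reg_r (2 * d)); [lra|].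
      unfold Rdiv. rewrite Rmult_assoc, Rinv_l by lra. lra. }
    assert (T2 : 3 * (d + 1) / x <= 3).
    { apply (Rmult_le_reg_r x); [lra|]. unfold Rdiv. rewrite Rmult_assoc, Rinv_l by lra. lra. }
    assert (T3 : 0 <= 3 * x * hh / d).
    { apply Rmult_le_pos; [| left; apply Rinv_0_lt_compat; lra]. nra. }
    assert (Hneg : - Defs.f d x p q + 3 * (- q) < 0).
    { rewrite Eq. apply Rmult_lt_0_compat' || idtac.
      assert (- 3 * x * (d - 2) / (2 * d) = - (3 * x * (d - 2) / (2 * d))) by (field; lra).
      nra. }
    destruct (loc_decr G x _ (DG x Ht0in) Hneg) as [del [Hdel Pd]].
    set (h := Rmin (del / 2) (eta2 - x)).
    assert (0 < h < del) by (unfold h; split; [apply Rmin_glb_lt; lra|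
       pose proof (Rmin_l (del/2) (eta2 - x)); lra]).
    assert (G (x + h) < G x) by (apply Pd; auto).
    assert (Hr : h <= eta2 - x) by apply Rmin_r.
    assert (x < x + h <= eta2) by lra.
    destruct (Hright (x + h)); [lra|]. lra.
Qed.
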